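(* Let $\Gamma=(V,E)$ be a reflexive, locally finite, $k$-separable graph, and assume that either $V$ is infinite or $\alpha_k(\Gamma)\le\alpha_{-k}(\Gamma)$. Let $A$ be a $k$-atom of $\Gamma$ and let $F$ be a $k$-fragment of $\Gamma$ with $|A\cap F|\ge k$. Then $A\subseteq F$. In particular, two distinct $k$-atoms of $\Gamma$ intersect in at most $k-1$ elements.
   Context: A graph is a pair $\Gamma=(V,E)$ with $E\subseteq V\times V$; reflexive means $(x,x)\in E$ for all $x$; locally finite means each $\Gamma(x)=\{y:(x,y)\in E\}$ is finite. For $A\subseteq V$: $\Gamma(A)=\bigcup_{x\in A}\Gamma(x)$, $\partial(A)=\Gamma(A)\setminus A$. $\Gamma^{-1}=(V,E^{-1})$ is the reverse graph. $\Gamma$ is $k$-separable if some finite $X$ has $|X|\ge k$ and $|V\setminus\Gamma(X)|\ge k$; then $\kappa_k(\Gamma)=\min\{|\partial(X)|: X\text{ finite}, |X|\ge k, |V\setminus\Gamma(X)|\ge k\}$, a $k$-fragment is a finite $X$ with $|X|\ge k$, $|V\setminus\Gamma(X)|\ge k$ and $|\partial(X)|=\kappa_k(\Gamma)$, a $k$-atom is a $k$-fragment of minimum cardinality, and $\alpha_k(\Gamma)$ is the cardinality of a $k$-atom. $\alpha_{-k}(\Gamma)=\alpha_k(\Gamma^{-1})$. *)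

(* Defs.v *)
From Stdlib Require Export Ensembles Finite_sets.

Section Graphs.
Variable V : Type.
Variable E : V -> V -> Prop.

Definition reflexive_graph : Prop := forall x, E x x.

Definition nbhd (x : V) : Ensemble V := fun y => E x y.

Definition locally_finite : Prop := forall x, Finite V (nbhd x).

Definition Gam (A : Ensemble V) : Ensemble V :=
  fun y => exists x, In V A x /\ E x y.

Definition bdry (A : Ensemble V) : Ensemble V := Setminus V (Gam A) A.

Definition coGam (A : Ensemble V) : Ensemble V := Complement V (Gam A).

(* |S| >= k, for a possibly infinite S *)
Definition atleast (k : nat) (S : Ensemble V) : Prop :=
  exists B, Included V B S /\ cardinal V B k.

Definition admissible (k : nat) (X : Ensemble V) : Prop :=
  Finite V X /\ atleast k X /\ atleast k (coGam X).

Definition separable (k : nat) : Prop := exists X, admissible k X.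

Definition is_kappa (k n : nat) : Prop :=
  (exists X, admissible k X /\ cardinal V (bdry X) n) /\
  (forall Y m, admissible k Y -> cardinal V (bdry Y) m -> n <= m).

Definition fragment (k : nat) (X : Ensemble V) : Prop :=
  admissible k X /\ exists n, is_kappa k n /\ cardinal V (bdry X) n.

Definition atom (k : nat) (A : Ensemble V) : Prop :=
  fragment k A /\
  forall F a f, fragment k F -> cardinal V A a -> cardinal V F f -> a <= f.

Definition is_alpha (k n : nat) : Prop :=
  exists A, atom k A /\ cardinal V A n.

End Graphs.

Arguments reflexive_graph {V} E.
Arguments locally_finite {V} E.
Arguments separable {V} E k.
Arguments fragment {V} E k X.
Arguments atom {V} E k A.
Arguments is_alpha {V} E k n.
Arguments atleast {V} k S.

Definition rev_graph {V : Type} (E : V -> V -> Prop) : V -> V -> Prop :=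
  fun x y => E y x.

(* Main.v *)
Require Import Defs.
From Stdlib Require Import Ensembles Finite_sets Classical Arith FunctionalExtensionality PropExtensionality Lia.

Lemma ext {U} (A B : Ensemble U) : Same_set U A B -> A = B.
Proof. intros [H1 H2]. apply functional_extensionality; intro x.
  apply propositional_extensionality. split; [apply H1|apply H2]. Qed.

Lemma Union_iff U A B (x:U) : Union U A B x <-> A x \/ B x.
Proof. split. intros []; auto. intros [h|h]; [left|right]; auto. Qed.
Lemma Inter_iff U A B (x:U) : Intersection U A B x <-> A x /\ B x.
Proof. split. intros []; auto. intros [h h']; split; auto. Qed.
Lemma Single_iff U (y x:U) : Singleton U y x <-> y = x.
Proof. split. intros []; auto. intros <-; constructor. Qed.
Lemma Empty_iff U (x:U) : Empty_set U x <-> False.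
Proof. split. intros []. intros []. Qed.
Lemma Full_iff U (x:U) : Full_set U x <-> True.
Proof. split; auto. intros; constructor. Qed.

Ltac sunf := unfold Add, Subtract, Setminus, Complement, Included, In in *;
  repeat (rewrite ?Union_iff, ?Inter_iff, ?Single_iff, ?Empty_iff, ?Full_iff in * ).
Ltac sclose := intuition; subst; try tauto; firstorder (subst; auto).
Ltac seteq := apply ext; split; intros ?z ?Hz; sunf.

Lemma card_remove U (X: Ensemble U) m : cardinal U X m ->
  forall x, In U X x -> exists m', m = S m' /\ cardinal U (Subtract U X x) m'.
Proof.
  induction 1 as [|A n HA IH y Hy]; intros x Hx.
  - destruct Hx.
  - destruct (classic (x = y)) as [->|Hne].
    + exists n; split; auto. replace (Subtract U (Add U A y) y) with A; auto.
      seteq; firstorder (subst; auto).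
    + assert (Hx' : In U A x). { unfold Add, In in Hx. rewrite Union_iff, Single_iff in Hx.
        destruct Hx; auto. congruence. }
      destruct (IH x Hx') as [n' [-> Hc]]. exists (S n'); split; auto.
      replace (Subtract U (Add U A y) x) with (Add U (Subtract U A x) y).
      * constructor; auto. unfold In, Subtract, Setminus. tauto.
      * seteq; sclose.
Qed.

Lemma card_empty_inv U n : cardinal U (Empty_set U) n -> n = 0.
Proof. intros H; inversion H; auto.
  assert (h: Add U A x x) by (sunf; auto). rewrite H0 in h. destruct h. Qed.

Lemma card_uniq U X a : cardinal U X a -> forall b, cardinal U X b -> a = b.
Proof.
  induction 1 as [|A n HA IH y Hy]; intros b Hb.
  - symmetry; apply (card_empty_inv _ _ Hb).
  - destruct (card_remove _ _ _ Hb y) as [b' [-> Hc]]. sunf; auto.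
    replace (Subtract U (Add U A y) y) with A in Hc. f_equal; auto.
    seteq; firstorder (subst; auto).
Qed.

Lemma card_split U (X : Ensemble U) n : cardinal U X n -> forall S,
  exists a b, cardinal U (Intersection U X S) a /\ cardinal U (Setminus U X S) b /\ a + b = n.
Proof.
  induction 1 as [|A n HA IH y Hy]; intros S0.
  - exists 0, 0. replace (Intersection U (Empty_set U) S0) with (Empty_set U) by (seteq; tauto).
    replace (Setminus U (Empty_set U) S0) with (Empty_set U) by (seteq; tauto).
    repeat split; constructor.
  - destruct (IH S0) as [a [b [Ha [Hb Hab]]]].
    destruct (classic (In U S0 y)) as [HS|HS].
    + exists (S a), b. split; [|split;[|lia]].
      * replace (Intersection U (Add U A y) S0) with (Add U (Intersection U A S0) y).
        constructor; auto. sunf; tauto. seteq; sclose.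
      * replace (Setminus U (Add U A y) S0) with (Setminus U A S0); auto.
        seteq; sclose.
    + exists a, (S b). split; [|split;[|lia]].
      * replace (Intersection U (Add U A y) S0) with (Intersection U A S0); auto.
        seteq; sclose.
      * replace (Setminus U (Add U A y) S0) with (Add U (Setminus U A S0) y).
        constructor; auto. sunf; tauto. seteq; sclose.
Qed.

Lemma fin_card U X : Finite U X -> exists n, cardinal U X n.
Proof. induction 1 as [|A HA [n Hn] x Hx]. exists 0; constructor. exists (S n); constructor; auto. Qed.
Lemma card_fin U X n : cardinal U X n -> Finite U X.
Proof. induction 1; constructor; auto. Qed.

Lemma fin_down U X Y : Included U X Y -> Finite U Y -> Finite U X.
Proof. intros HI HY. destruct (fin_card _ _ HY) as [n Hn].
  destruct (card_split _ _ _ Hn X) as [a [b [Ha _]]].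
  replace X with (Intersection U Y X). eapply card_fin; eauto.
  seteq; intuition. Qed.

Lemma card_sub U X Y a b : Included U X Y -> cardinal U X a -> cardinal U Y b ->
  a <= b /\ (forall y, In U Y y -> ~ In U X y -> a < b).
Proof. intros HI Ha Hb. destruct (card_split _ _ _ Hb X) as [a' [c [Ha' [Hc E']]]].
  replace (Intersection U Y X) with X in Ha' by (seteq; intuition).
  pose proof (card_uniq _ _ _ Ha _ Ha'); subst a'. split. lia.
  intros y Hy Hn. destruct (card_remove _ _ _ Hc y) as [c' [-> _]]. split; auto. lia. Qed.

Lemma atleast_card U k (S0 : Ensemble U) c : atleast k S0 -> cardinal U S0 c -> k <= c.
Proof. intros [B [HB Hk]] Hc. eapply card_sub; eauto. Qed.

Lemma card_atleast U (S0 : Ensemble U) c : cardinal U S0 c -> forall k, k <= c -> atleast k S0.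
Proof. induction 1 as [|A n HA IH y Hy]; intros k Hk.
  - assert (k = 0) by lia; subst. exists (Empty_set U); split. intros z []. constructor.
  - destruct (Nat.eq_dec k (S n)) as [->|Hne].
    + exists (Add U A y); split. intros z h; auto. constructor; auto.
    + destruct (IH k ltac:(lia)) as [B [HB HBk]]. exists B; split; auto.
      intros z h. left. auto.
Qed.

Lemma atleast_mono U k (S0 T : Ensemble U) : Included U S0 T -> atleast k S0 -> atleast k T.
Proof. intros HI [B [HB Hk]]. exists B; split; auto. intros z h; auto. Qed.

Lemma fin_add U X x : Finite U X -> Finite U (Add U X x).
Proof. intros H. destruct (classic (In U X x)).
  replace (Add U X x) with X; auto. seteq; sclose.
  constructor; auto. Qed.

Lemma fin_union U X Y : Finite U X -> Finite U Y -> Finite U (Union U X Y).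
Proof. induction 1 as [|A HA IH x Hx]; intros HY.
  - replace (Union U (Empty_set U) Y) with Y; auto. seteq; intuition.
  - replace (Union U (Add U A x) Y) with (Add U (Union U A Y) x). apply fin_add; auto.
    seteq; intuition. Qed.

Lemma infinite_comp U k (S0 : Ensemble U) : ~ Finite U (Full_set U) -> Finite U S0 ->
  atleast k (Complement U S0).
Proof. intros Hinf HS. induction k.
  - exists (Empty_set U); split. intros z []. constructor.
  - destruct IHk as [B [HB Hk]].
    assert (exists x, ~ In U (Union U S0 B) x) as [x Hx].
    { apply NNPP; intro Hn. apply Hinf.
      apply fin_down with (Union U S0 B). intros z _. apply NNPP; intro h; apply Hn; eauto.
      apply fin_union; auto. eapply card_fin; eauto. }
    exists (Add U B x); split.
    + intros z Hz. unfold Add, In in Hz. rewrite Union_iff, Single_iff in Hz. destruct Hz as [h| <-]; auto.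
      intro h; apply Hx; left; auto.
    + constructor; auto. intro h; apply Hx; right; auto.
Qed.

Section G.
Variable V : Type.

Lemma Gam_fin (G : V -> V -> Prop) X : locally_finite G -> Finite V X -> Finite V (Gam V G X).
Proof. intros Hlf. induction 1 as [|A HA IH x Hx].
  - replace (Gam V G (Empty_set V)) with (Empty_set V). constructor.
    seteq; unfold Gam in *; firstorder.
  - replace (Gam V G (Add V A x)) with (Union V (Gam V G A) (nbhd V G x)).
    apply fin_union; auto.
    seteq; unfold Gam, nbhd in *; sunf.
    + destruct Hz as [[w [h1 h2]]|h]; [exists w|exists x]; sunf; auto.
    + destruct Hz as [w [h1 h2]]. sunf. destruct h1 as [h1| <-]; [left; exists w|right]; sunf; auto.
Qed.

Lemma Gam_mono (G : V -> V -> Prop) X Y : Included V X Y -> Included V (Gam V G X) (Gam V G Y).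
Proof. intros H z [w [h1 h2]]. exists w; split; auto. Qed.

Lemma coGam_anti (G : V -> V -> Prop) X Y : Included V X Y -> Included V (coGam V G Y) (coGam V G X).
Proof. intros H z h1 h2. apply h1. eapply Gam_mono; eauto. Qed.

Lemma Gam_union (G : V -> V -> Prop) X Y : Gam V G (Union V X Y) = Union V (Gam V G X) (Gam V G Y).
Proof. seteq; unfold Gam in *; sunf.
  - destruct Hz as [w [h1 h2]]. sunf. destruct h1; [left|right]; exists w; sunf; auto.
  - destruct Hz as [[w [h1 h2]]|[w [h1 h2]]]; exists w; sunf; auto.
Qed.

Lemma card_gam (G : V -> V -> Prop) X a p g : reflexive_graph G ->
  cardinal V X a -> cardinal V (bdry V G X) p -> cardinal V (Gam V G X) g -> g = a + p.
Proof. intros Hr Ha Hp Hg. destruct (card_split _ _ _ Hg X) as [a' [p' [Ha' [Hp' E']]]].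
  replace (Intersection V (Gam V G X) X) with X in Ha'.
  pose proof (card_uniq _ _ _ Ha _ Ha'). pose proof (card_uniq _ _ _ Hp _ Hp'). lia.
  seteq; unfold Gam; firstorder. Qed.

Lemma incl_excl X Y a b c d : cardinal V X a -> cardinal V Y b ->
  cardinal V (Union V X Y) c -> cardinal V (Intersection V X Y) d -> c + d = a + b.
Proof. intros Ha Hb Hc Hd.
  destruct (card_split _ _ _ Hc X) as [a1 [e1 [H1 [H2 E1]]]].
  destruct (card_split _ _ _ Hb X) as [a2 [e2 [H3 [H4 E2]]]].
  replace (Intersection V (Union V X Y) X) with X in H1 by (seteq; sclose).
  replace (Setminus V (Union V X Y) X) with (Setminus V Y X) in H2 by (seteq; sclose).
  replace (Intersection V Y X) with (Intersection V X Y) in H3 by (seteq; sclose).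
  pose proof (card_uniq _ _ _ Ha _ H1). pose proof (card_uniq _ _ _ H2 _ H4).
  pose proof (card_uniq _ _ _ Hd _ H3). lia. Qed.

Lemma card_comp (G : V -> V -> Prop) X N g c : cardinal V (Full_set V) N ->
  cardinal V (Gam V G X) g -> cardinal V (coGam V G X) c -> g + c = N.
Proof. intros HN Hg Hc. destruct (card_split _ _ _ HN (Gam V G X)) as [g' [c' [H1 [H2 E1]]]].
  replace (Intersection V (Full_set V) (Gam V G X)) with (Gam V G X) in H1 by (seteq; sclose).
  replace (Setminus V (Full_set V) (Gam V G X)) with (coGam V G X) in H2 by (unfold coGam; seteq; sclose).
  pose proof (card_uniq _ _ _ Hg _ H1). pose proof (card_uniq _ _ _ Hc _ H2). lia. Qed.

Lemma star (G : V -> V -> Prop) k X : Finite V (Full_set V) -> admissible V G k X ->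
  admissible V (rev_graph G) k (coGam V G X) /\
  Included V (bdry V (rev_graph G) (coGam V G X)) (bdry V G X).
Proof. intros Hf [HX [Hk Hk']]. split; [split; [|split]|].
  - eapply fin_down; [|exact Hf]. intros z _; constructor.
  - exact Hk'.
  - eapply atleast_mono; [|exact Hk]. intros x Hx [y [Hy Hxy]]. apply Hy. exists x; split; auto.
  - intros z [[y [Hy Hzy]] Hnz]. split.
    + apply NNPP; intro h; apply Hnz; exact h.
    + intro h. apply Hy. exists z; split; auto.
Qed.

Lemma kappa_uniq (G : V -> V -> Prop) k n m : is_kappa V G k n -> is_kappa V G k m -> n = m.
Proof. intros [[X [HX Hn]] Hminn] [[Y [HY Hm]] Hminm].
  pose proof (Hminn _ _ HY Hm). pose proof (Hminm _ _ HX Hn). lia. Qed.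

Lemma bdry_fin (G : V -> V -> Prop) X : locally_finite G -> Finite V X -> Finite V (bdry V G X).
Proof. intros. eapply fin_down; [|apply Gam_fin; eauto]. intros z [h _]; auto. Qed.

Lemma rev_min (G : V -> V -> Prop) k n : Finite V (Full_set V) -> is_kappa V G k n ->
  forall Y m, admissible V (rev_graph G) k Y -> cardinal V (bdry V (rev_graph G) Y) m -> n <= m.
Proof. intros Hf [_ Hmin] Y m HY Hm.
  destruct (star (rev_graph G) k Y Hf HY) as [HY' Hinc].
  change (admissible V G k (coGam V (rev_graph G) Y)) in HY'.
  change (Included V (bdry V G (coGam V (rev_graph G) Y)) (bdry V (rev_graph G) Y)) in Hinc.
  destruct (fin_card _ _ (fin_down _ _ _ (fun z _ => Full_intro V z) Hf) : exists m', cardinal V (bdry V G (coGam V (rev_graph G) Y)) m') as [m' Hm'].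
  pose proof (Hmin _ _ HY' Hm'). destruct (card_sub _ _ _ _ _ Hinc Hm' Hm). lia. Qed.

Lemma rev_frag (G : V -> V -> Prop) k n F : Finite V (Full_set V) -> is_kappa V G k n ->
  fragment G k F -> fragment (rev_graph G) k (coGam V G F).
Proof. intros Hf Hk [HF [n' [Hk' Hn']]].
  pose proof (kappa_uniq _ _ _ _ Hk Hk'); subst n'.
  assert (Hm := rev_min G k n Hf Hk).
  assert (Hfrag : forall X, admissible V G k X -> cardinal V (bdry V G X) n ->
     admissible V (rev_graph G) k (coGam V G X) /\ cardinal V (bdry V (rev_graph G) (coGam V G X)) n).
  { intros X HX HXn. destruct (star G k X Hf HX) as [HX' Hinc]. split; auto.
    destruct (fin_card _ _ (fin_down _ _ _ (fun z _ => Full_intro V z) Hf) : exists m', cardinal V (bdry V (rev_graph G) (coGam V G X)) m') as [m' Hm'].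
    pose proof (Hm _ _ HX' Hm'). destruct (card_sub _ _ _ _ _ Hinc Hm' HXn).
    replace n with m' by lia. auto. }
  destruct (Hfrag F HF Hn') as [H1 H2]. split; auto. exists n; split; auto.
  split; auto. exists (coGam V G F); auto.
Qed.

End G.

Lemma fc {V} (X : Ensemble V) : Finite V X -> exists n, cardinal V X n.
Proof. apply fin_card. Qed.

Theorem mainTheorem4 (V : Type) (E : V -> V -> Prop) (k : nat)
  (Hrefl : reflexive_graph E) (Hlf : locally_finite E) (Hsep : separable E k)
  (Hcase : ~ Finite V (Full_set V) \/
           exists a b, is_alpha E k a /\ is_alpha (rev_graph E) k b /\ a <= b) :
  (forall A F, atom E k A -> fragment E k F ->
     atleast k (Intersection V A F) -> Included V A F) /\
  (forall A B, atom E k A -> atom E k B -> ~ Same_set V A B ->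
     forall n, cardinal V (Intersection V A B) n -> n <= k - 1).
Proof.
  assert (P1 : forall A F, atom E k A -> fragment E k F ->
     atleast k (Intersection V A F) -> Included V A F).
  { intros A F HAt HF HPk.
    destruct HAt as [HA HAmin].
    destruct HA as [HAad [n0 [Hk0 HAn]]].
    destruct HF as [HFad [nF [HkF HFn]]].
    pose proof (kappa_uniq _ _ _ _ _ Hk0 HkF); subst nF.
    pose (P := Intersection V A F). pose (Q := Union V A F).
    destruct HAad as [HAf [HAk HAk']]. destruct HFad as [HFf [HFk HFk']].
    assert (HPf : Finite V P) by (apply fin_down with A; [intros z []; auto|auto]).
    assert (HQf : Finite V Q) by (apply fin_union; auto).
    destruct (fc _ HAf) as [a Ha]. destruct (fc _ HFf) as [f Hf].
    destruct (fc _ HPf) as [p Hp]. destruct (fc _ HQf) as [q Hq].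
    destruct (fc _ (Gam_fin _ E A Hlf HAf)) as [gA HgA].
    destruct (fc _ (Gam_fin _ E F Hlf HFf)) as [gF HgF].
    destruct (fc _ (Gam_fin _ E P Hlf HPf)) as [gP HgP].
    destruct (fc _ (Gam_fin _ E Q Hlf HQf)) as [gQ HgQ].
    destruct (fc _ (bdry_fin _ E P Hlf HPf)) as [bP HbP].
    destruct (fc _ (bdry_fin _ E Q Hlf HQf)) as [bQ HbQ].
    assert (HIf : Finite V (Intersection V (Gam V E A) (Gam V E F))).
    { apply fin_down with (Gam V E A); [intros z []; auto|apply Gam_fin; auto]. }
    destruct (fc _ HIf) as [gI HgI].
    pose proof (card_gam _ E A a n0 gA Hrefl Ha HAn HgA).
    pose proof (card_gam _ E F f n0 gF Hrefl Hf HFn HgF).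
    pose proof (card_gam _ E P p bP gP Hrefl Hp HbP HgP).
    pose proof (card_gam _ E Q q bQ gQ Hrefl Hq HbQ HgQ).
    pose proof (incl_excl _ A F a f q p Ha Hf Hq Hp).
    assert (gQ + gI = gA + gF).
    { apply (incl_excl _ _ _ gA gF gQ gI HgA HgF); auto. unfold Q in HgQ; rewrite Gam_union in HgQ; auto. }
    assert (gP <= gI).
    { destruct (card_sub _ (Gam V E P) (Intersection V (Gam V E A) (Gam V E F)) gP gI) as [h _]; auto.
      intros z Hz. split; eapply Gam_mono; try exact Hz; intros w []; auto. }
    assert (HPad : admissible V E k P).
    { split; [auto|split; auto]. eapply atleast_mono; [|exact HAk'].
      apply coGam_anti. intros z []; auto. }
    assert (n0 <= bP) by (destruct Hk0 as [_ Hmin]; eapply Hmin; eauto).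
    assert (HPk' : k <= p) by (eapply atleast_card; eauto).
    assert (HQad : admissible V E k Q).
    { split; [auto|split].
      - eapply atleast_mono; [|exact HAk]. intros z h; left; auto.
      - destruct (classic (Finite V (Full_set V))) as [Hfin|Hinf].
        + destruct Hcase as [Hc|[a0 [b0 [[A0 [HA0 Ha0]] [[B0 [HB0 Hb0]] Hab]]]]]; [contradiction|].
          destruct (fc _ Hfin) as [N HN].
          assert (HcQf : Finite V (coGam V E Q)) by (eapply fin_down; [|exact Hfin]; intros z _; constructor).
          destruct (fc _ HcQf) as [c Hc].
          assert (HcFf : Finite V (coGam V E F)) by (eapply fin_down; [|exact Hfin]; intros z _; constructor).
          destruct (fc _ HcFf) as [fs Hfs].
          pose proof (card_comp _ E Q N gQ c HN HgQ Hc).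
          pose proof (card_comp _ E F N gF fs HN HgF Hfs).
          assert (a <= a0) by (eapply HAmin; [apply HA0| |]; eauto).
          assert (b0 <= fs).
          { destruct HB0 as [_ HB0min]. eapply HB0min; [|exact Hb0|exact Hfs].
            apply (rev_frag _ E k n0); auto. split; [split; auto|exists n0; split; auto]. }
          eapply card_atleast; eauto. lia.
        + apply infinite_comp; auto. apply Gam_fin; auto. }
    assert (n0 <= bQ) by (destruct Hk0 as [_ Hmin]; eapply Hmin; eauto).
    assert (HPfrag : fragment E k P).
    { split; auto. exists n0; split; auto. replace n0 with bP by lia; auto. }
    pose proof (HAmin P a p HPfrag Ha Hp).
    intros x Hx. apply NNPP; intro HnF.
    destruct (card_sub _ P A p a) as [_ Hs]; auto. intros z []; auto.
    specialize (Hs x Hx). assert (p < a). apply Hs. unfold P; intro h; inversion h; auto. lia. }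
  split; auto.
  intros A B HA HB Hne n Hn. destruct (le_lt_dec k n) as [Hkn|]; [|lia].
  exfalso. apply Hne.
  assert (HAB : Included V A B) by (apply P1; auto; [apply HB|eapply card_atleast; eauto]).
  destruct HA as [HAfr HAmin]. destruct HB as [HBfr HBmin].
  destruct (fc _ (proj1 (proj1 HAfr))) as [a Ha]. destruct (fc _ (proj1 (proj1 HBfr))) as [b Hb].
  assert (b <= a) by (exact (HBmin A b a HAfr Hb Ha)).
  split; auto. intros x Hx. apply NNPP; intro Hn'.
  destruct (card_sub _ A B a b HAB Ha Hb) as [_ Hs]. specialize (Hs x Hx Hn'). lia.
Qed.
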